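(* Let $(W,S)$ be a Coxeter system and partition $S=B\sqcup C$. Let $f,f'\in W_B$ and $g,g'\in W_C$. Then $\ell(fg)=\ell(gf)=\ell(f)+\ell(g)$. Let $s\in B$ be a simple reflection commuting with every element of $C$, and $t\in B$ arbitrary. Then: (1) $s\in\mathcal R(f)$ if and only if $s\in\mathcal R(gfg')$; (2) if $t\notin\mathcal R(f)$ then $t\notin\mathcal R(fg)$; (3) $t\in\mathcal R(f)$ if and only if $t\in\mathcal R(gf)$; (4) if $t\notin\mathcal R(f)$ then $t\notin\mathcal R(gfg')$; (5) if $\ell(ff')=\ell(f)+\ell(f')$, then $t\in\mathcal R(f')$ implies $t\in\mathcal R(fgf')$.
   Context: $W_B$, $W_C$ denote the standard parabolic subgroups generated by $B$ and $C$; $\ell$ is the length function and $\mathcal R(w)$ the right descent set $\{u\in S:\ell(wu)<\ell(w)\}$. *)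

(* Defs.v *)
From HB Require Import structures.
From mathcomp Require Import all_boot.
From Stdlib Require Import ClassicalEpsilon.
From Stdlib Require List.
Set Implicit Arguments. Unset Strict Implicit. Unset Printing Implicit Defensive.
Local Open Scope group_scope.

Section Coxeter.
Variable W : groupType.

Definition prodw (l : seq W) : W := \prod_(x <- l) x.

(* (W,S) is a Coxeter system (Bourbaki): the elements of S are involutions
   (of order 2), S generates W, and W has the presentation
   < S | (s t)^{m(s,t)} = 1 >, m(s,t) = order of st, expressed by the
   universal property: any map f : S -> H into a group H such that
   (f s f t)^n = 1 whenever (s t)^n = 1 in W extends to a homomorphism. *)
Definition coxeter_system (S : W -> Prop) : Prop :=
  (forall s, S s -> s <> 1 /\ s * s = 1) /\
  (forall w, exists l, List.Forall S l /\ prodw l = w) /\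
  (forall (H : groupType) (f : W -> H),
     (forall s t n, S s -> S t -> (s * t) ^+ n = 1 -> (f s * f t) ^+ n = 1) ->
     exists phi : W -> H,
       (forall x y, phi (x * y) = phi x * phi y) /\
       (forall s, S s -> phi s = f s)).

Definition has_word_len (S : W -> Prop) (w : W) (n : nat) : Prop :=
  exists l, List.Forall S l /\ size l = n /\ prodw l = w.

Definition coxlen (S : W -> Prop) (w : W) : nat :=
  epsilon (inhabits 0%N)
    (fun n => has_word_len S w n /\ forall m, has_word_len S w m -> (n <= m)%N).

Definition parabolic (B : W -> Prop) (w : W) : Prop :=
  exists l, List.Forall (fun x => B x \/ B x^-1) l /\ prodw l = w.

Definition rdescent (S : W -> Prop) (w u : W) : Prop :=
  S u /\ (coxlen S (w * u) < coxlen S w)%N.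

End Coxeter.

(* Main.v *)
Require Import Defs.
From HB Require Import structures.
From mathcomp Require Import all_boot.
From mathcomp Require Import boolp.
From mathcomp Require Import zify.
From Stdlib Require Import ClassicalEpsilon.
From Stdlib Require List.
Set Implicit Arguments. Unset Strict Implicit. Unset Printing Implicit Defensive.
Local Open Scope group_scope.

Section SDP.
Variable W : groupType.

Record SD := mkSD { sdw : W; sdn : W -> bool }.

HB.instance Definition _ := gen_eqMixin SD.
HB.instance Definition _ := gen_choiceMixin SD.

Definition sd_one := mkSD 1 (fun _ => false).
Definition sd_mul (p q : SD) :=
  mkSD (sdw p * sdw q) (fun r => sdn q r (+) sdn p (sdw q * r * (sdw q)^-1)).
Definition sd_inv (p : SD) :=
  mkSD (sdw p)^-1 (fun r => sdn p ((sdw p)^-1 * r * sdw p)).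

Lemma sd_ext (p q : SD) : sdw p = sdw q -> (forall r, sdn p r = sdn q r) -> p = q.
Proof.
case: p q => [x a] [y b] /= -> H.
by have -> : a = b by apply: functional_extensionality_dep.
Qed.

Lemma sd_mulA : associative sd_mul.
Proof.
move=> [x a] [y b] [z c]; apply: sd_ext => /=; first by rewrite mulgA.
move=> r; rewrite addbA; congr (_ (+) _ (+) _).
by rewrite invgM !mulgA.
Qed.

Lemma sd_mul1 : left_id sd_one sd_mul.
Proof. by move=> [x a]; apply: sd_ext => /= [|r]; rewrite ?mul1g ?addbF. Qed.

Lemma sd_mulg1 : right_id sd_one sd_mul.
Proof. by move=> [x a]; apply: sd_ext => /= [|r]; rewrite ?mulg1 ?invg1 ?mul1g ?mulg1. Qed.

Lemma sd_mulV : left_inverse sd_one sd_inv sd_mul.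
Proof.
move=> [x a]; apply: sd_ext => /= [|r]; first by rewrite mulVg.
by rewrite !mulgA mulVg mul1g mulgVK addbb.
Qed.

Lemma sd_mulgV : right_inverse sd_one sd_inv sd_mul.
Proof.
move=> [x a]; apply: sd_ext => /= [|r]; first by rewrite mulgV.
by rewrite invgK addbb.
Qed.

HB.instance Definition _ := isGroup.Build SD sd_mulA sd_mul1 sd_mulg1 sd_mulV sd_mulgV.

End SDP.

Ltac pg := match goal with |- ?G => idtac "GOAL:" G end.

Fixpoint xs (F : nat -> bool) (n : nat) : bool :=
  if n is m.+1 then xs F m (+) F m else false.

Lemma xs_add F m n : xs F (m + n) = xs F m (+) xs (fun j => F (m + j)) n.
Proof. elim: n => [|n IH] /=; first by rewrite addn0 addbF. by rewrite addnS /= IH addbA. Qed.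

Lemma xs_pair F n : xs (fun k => F k.*2 (+) F k.*2.+1) n = xs F n.*2.
Proof. elim: n => [|n IH] //=. by rewrite IH /= addbA. Qed.

Lemma xs_ext F G n : (forall k, F k = G k) -> xs F n = xs G n.
Proof. move=> H; elim: n => //= n ->; by rewrite H. Qed.

Section Cox.
Variable W : groupType.
Variable S : W -> Prop.
Hypothesis hS : coxeter_system S.

Lemma S_sq s : S s -> s * s = 1.
Proof. by case: hS => H _ /H []. Qed.
Lemma S_ne1 s : S s -> s <> 1.
Proof. by case: hS => H _ /H []. Qed.
Lemma S_V s : S s -> s^-1 = s.
Proof. by move=> /S_sq H; apply: mulg1_eq. Qed.

Lemma conj_eq (y r z : W) : (y * r * y^-1 == z) = (r == y^-1 * z * y).
Proof.
apply/eqP/eqP => [<-|->]; first by rewrite !mulgA mulVg mul1g mulgVK.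
by rewrite !mulgA mulgV mul1g mulgK.
Qed.

Definition fS (w : W) : SD W := mkSD w (fun r => r == w).

Lemma sd_exp (p : SD W) n : sdw (p ^+ n) = (sdw p) ^+ n /\
  forall r, sdn (p ^+ n) r = xs (fun k => sdn p ((sdw p)^+k * r * ((sdw p)^+k)^-1)) n.
Proof.
elim: n => [|n [IH1 IH2]]; first by split.
rewrite !expgS; split; first by rewrite /= IH1.
by move=> r; rewrite /= IH2 IH1.
Qed.

Lemma fS_rel s t n : S s -> S t -> (s * t) ^+ n = 1 -> (fS s * fS t) ^+ n = 1.
Proof.
move=> Ss St Hn; set x := s * t.
have sx1 : s * x * s = x^-1.
  by rewrite /x invgM (S_V Ss) (S_V St) !mulgA S_sq ?mul1g.
have sxs : forall k, s * x ^+ k * s = (x ^+ k)^-1.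
  move=> k; elim: k => [|k IH]; first by rewrite expg0 mulg1 S_sq ?invg1.
  rewrite {2}expgSr invgM -IH -sx1 expgS !mulgA.
  by rewrite S_sq // mul1g -(mulgA t s s) S_sq // mulg1.
have xk : forall k, (x ^+ k)^-1 * s = s * x ^+ k.
  by move=> k; rewrite -sxs -!mulgA S_sq // mulg1.
have ht : t = s * x by rewrite /x mulgA S_sq ?mul1g.
apply: sd_ext => /=.
  by have [-> _] := sd_exp (fS s * fS t) n.
move=> r; have [_ ->] := sd_exp (fS s * fS t) n.
set G := fun j => r == s * x ^+ j.+1.
rewrite /= -/x.
rewrite (xs_ext (G := fun k => G k.*2 (+) G k.*2.+1)); last first.
  move=> k; rewrite /G; congr (_ (+) _).
    rewrite conj_eq ht mulgA xk -(mulgA s (x ^+ k) x) -expgSr -(mulgA s) -expgnDr.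
    by rewrite addSn addnn.
  rewrite conj_eq conj_eq (S_V St).
  have -> : t * s * t = s * x ^+ 2 by rewrite ht expgS expg1 !mulgA S_sq // !mul1g -(mulgA t s s) S_sq // mulg1.
  rewrite mulgA xk -(mulgA s) -expgnDr -(mulgA s) -expgnDr.
  by rewrite addnAC addnn addn2.
rewrite (xs_pair G) -addnn xs_add.
rewrite (xs_ext (G := G)) ?addbb // => j.
by rewrite /G -addnS expgnDr Hn mul1g.
Qed.


Definition phi_sig := constructive_indefinite_description _
  (proj2 (proj2 hS) (SD W) fS (fun s t n Ss St H => @fS_rel s t n Ss St H)).
Definition phi : W -> SD W := proj1_sig phi_sig.
Lemma phiM x y : phi (x * y) = phi x * phi y.
Proof. exact: (proj1 (proj2_sig phi_sig)). Qed.
Lemma phiS s : S s -> phi s = fS s.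
Proof. exact: (proj2 (proj2_sig phi_sig)). Qed.

Lemma prodw_nil : prodw ([::] : seq W) = 1.
Proof. by rewrite /prodw big_nil. Qed.
Lemma prodw_cons a (l : seq W) : prodw (a :: l) = a * prodw l.
Proof. by rewrite /prodw big_cons. Qed.
Lemma prodw_cat (l1 l2 : seq W) : prodw (l1 ++ l2) = prodw l1 * prodw l2.
Proof. by rewrite /prodw big_cat. Qed.
Lemma prodw_rcons (l : seq W) a : prodw (rcons l a) = prodw l * a.
Proof. by rewrite -cats1 prodw_cat prodw_cons prodw_nil mulg1. Qed.

Lemma Forall_cat (P : W -> Prop) (l1 l2 : seq W) :
  List.Forall P (l1 ++ l2) <-> List.Forall P l1 /\ List.Forall P l2.
Proof.
elim: l1 => [|a l IH] /=; first by split => [H|[]].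
split.
  move=> H; inversion H as [|x y Hx Hy]; subst; have [K1 K2] := proj1 IH Hy; split => //; by constructor.
by case=> H1 H2; inversion H1; subst; constructor => //; apply/IH.
Qed.

Lemma Forall_cons_iff (P : W -> Prop) a (l : seq W) :
  List.Forall P (a :: l) <-> P a /\ List.Forall P l.
Proof. by split => [H|[]]; [inversion H|constructor]. Qed.

Lemma Forall_rev (P : W -> Prop) (l : seq W) : List.Forall P l -> List.Forall P (rev l).
Proof.
elim: l => [|a l IH] //= /Forall_cons_iff [Pa Pl].
by rewrite rev_cons -cats1; apply/Forall_cat; split; [apply: IH|constructor].
Qed.

Lemma Forall_impl' (P Q : W -> Prop) (l : seq W) :
  (forall x, P x -> Q x) -> List.Forall P l -> List.Forall Q l.
Proof. move=> H; exact: List.Forall_impl. Qed.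

Lemma prodw_rev (l : seq W) : List.Forall S l -> prodw (rev l) = (prodw l)^-1.
Proof.
elim: l => [|a l IH] /=; first by rewrite prodw_nil invg1.
move=> /Forall_cons_iff [Sa Sl].
by rewrite rev_cons prodw_rcons IH // prodw_cons invgM (S_V Sa).
Qed.

Lemma gen (w : W) : exists l, List.Forall S l /\ prodw l = w.
Proof. by case: hS => _ [H _]. Qed.

Lemma phi1 : phi 1 = 1.
Proof.
have H : phi 1 * phi 1 = phi 1 * 1 by rewrite -phiM mulg1 mulg1.
exact: (mulgI _ _ _ H).
Qed.

Lemma phi_w w : sdw (phi w) = w.
Proof.
have [l [Hl <-]] := gen w.
elim: l Hl => [|a l IH]; first by rewrite prodw_nil phi1.
move=> /Forall_cons_iff [Sa Sl].
by rewrite prodw_cons phiM /= IH // phiS.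
Qed.

Definition N w r := sdn (phi w) r.

Lemma N_mul x y r : N (x * y) r = N y r (+) N x (y * r * y^-1).
Proof. by rewrite /N phiM /= phi_w. Qed.
Lemma N_S s r : S s -> N s r = (r == s).
Proof. by move=> Ss; rewrite /N phiS. Qed.
Lemma N_1 r : N 1 r = false.
Proof. by rewrite /N phi1. Qed.

Lemma N_word (l : seq W) r : List.Forall S l -> N (prodw l) r ->
  exists l1 a l2, l = l1 ++ a :: l2 /\ r = (prodw l2)^-1 * a * prodw l2.
Proof.
elim: l => [|a l IH]; first by rewrite prodw_nil N_1.
move=> /Forall_cons_iff [Sa Sl]; rewrite prodw_cons N_mul (N_S _ Sa).
case HN: (N (prodw l) r).
  have [l1 [a' [l2 [-> E]]]] := IH Sl HN.
  by move=> _; exists (a :: l1), a', l2.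
rewrite /= conj_eq => /eqP E.
by exists [::], a, l.
Qed.

Lemma ex_min (P : nat -> Prop) : (exists n, P n) ->
  exists m, P m /\ forall k, P k -> (m <= k)%N.
Proof.
move=> [n Pn]; elim/ltn_ind: n Pn => n IH Pn.
case: (classic (exists k, (k < n)%N /\ P k)) => [[k [lt Pk]]|no].
  exact: IH lt Pk.
exists n; split => // k Pk; rewrite leqNgt; apply/negP => lt; apply: no; by exists k.
Qed.

Notation len := (coxlen S).

Lemma len_spec w : has_word_len S w (len w) /\
  forall m, has_word_len S w m -> (len w <= m)%N.
Proof.
rewrite /coxlen; apply: (epsilon_spec (inhabits 0%N) (fun n => has_word_len S w n /\ forall m, has_word_len S w m -> (n <= m)%N)).
apply: ex_min; have [l [Hl E]] := gen w; by exists (size l), l.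
Qed.

Lemma len_le (l : seq W) : List.Forall S l -> (len (prodw l) <= size l)%N.
Proof. move=> Hl; apply: (proj2 (len_spec _)); by exists l. Qed.

Lemma len_word w : exists l, List.Forall S l /\ size l = len w /\ prodw l = w.
Proof. exact: (proj1 (len_spec w)). Qed.

Lemma len0 w : len w = 0 -> w = 1.
Proof. have [[|a l] [_ [/= <- <-]]] := len_word w => //; by rewrite prodw_nil. Qed.

Lemma len1 : len 1 = 0.
Proof. apply/eqP; rewrite -leqn0 -prodw_nil; exact: (@len_le [::]). Qed.

Lemma len_mul x y : (len (x * y) <= len x + len y)%N.
Proof.
have [lx [Hx [<- <-]]] := len_word x; have [ly [Hy [<- <-]]] := len_word y.
rewrite -prodw_cat -size_cat; apply: len_le; by apply/Forall_cat.
Qed.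

Lemma len_inv_le x : (len x^-1 <= len x)%N.
Proof.
have [lx [Hx [<- <-]]] := len_word x.
by rewrite -prodw_rev // -size_rev; apply: len_le; apply: Forall_rev.
Qed.

Lemma len_inv x : len x^-1 = len x.
Proof. by apply/eqP; rewrite eqn_leq len_inv_le /=; have := len_inv_le x^-1; rewrite invgK. Qed.

Lemma lenN w s : S s -> N w s -> (len (w * s) < len w)%N.
Proof.
move=> Ss; have [l [Hl [Hs Ew]]] := len_word w; rewrite -Ew => /(N_word Hl) [l1 [a [l2 [El E]]]].
have -> : prodw l * s = prodw (l1 ++ l2).
  have Sa : S a by move: Hl; rewrite El => /Forall_cat [_ /Forall_cons_iff []].
  by rewrite El prodw_cat prodw_cons E prodw_cat !mulgA mulgK -(mulgA _ a a) S_sq // mulg1.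
apply: (leq_ltn_trans (len_le _)).
  by move: Hl; rewrite El => /Forall_cat [H1 /Forall_cons_iff [_ H2]]; apply/Forall_cat.
by rewrite Ew -Hs El !size_cat /= addnS.
Qed.

Lemma lenNn w s : S s -> N w s = false -> (len w < len (w * s))%N.
Proof.
move=> Ss HN.
have H : N (w * s) s by rewrite N_mul N_S // eqxx /= mulgK HN.
by have := lenN Ss H; rewrite -mulgA S_sq // mulg1.
Qed.

Lemma desc_N w s : S s -> (len (w * s) < len w)%N = N w s.
Proof.
move=> Ss; case HN: (N w s); first exact: lenN.
by apply/negP => H; have := lenNn Ss HN; rewrite ltnNge => /negP; apply; apply: ltnW.
Qed.

Lemma len_s s : S s -> len s = 1%N.
Proof.
move=> Ss; apply/eqP; rewrite eqn_leq; apply/andP; split.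
  have := @len_le [:: s]; rewrite prodw_cons prodw_nil mulg1; apply; by constructor.
by rewrite lt0n; apply/negP => /eqP /len0 /(S_ne1 Ss).
Qed.

Lemma len_S w s : S s -> len (w * s) = (len w).+1 \/ (len (w * s)).+1 = len w.
Proof.
move=> Ss; have Hs1 := len_s Ss.
have H1 := len_mul w s. have H2 := len_mul (w * s) s.
rewrite -mulgA S_sq // mulg1 in H2.
case HN: (N w s).
  have := lenN Ss HN => lt; right; lia.
have := lenNn Ss HN => lt; left; lia.
Qed.

Lemma exch w s (l : seq W) : S s -> (len (w * s) < len w)%N ->
  List.Forall S l -> prodw l = w ->
  exists l1 a l2, l = l1 ++ a :: l2 /\ w * s = prodw (l1 ++ l2).
Proof.
move=> Ss; rewrite desc_N // => HN Hl Ew; subst w.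
have [l1 [a [l2 [El E]]]] := N_word Hl HN.
exists l1, a, l2; split => //.
have Sa : S a by move: Hl; rewrite El => /Forall_cat [_ /Forall_cons_iff []].
by rewrite El prodw_cat prodw_cons E prodw_cat !mulgA mulgK -(mulgA _ a a) S_sq // mulg1.
Qed.

Lemma exchL w s (l : seq W) : S s -> (len (s * w) < len w)%N ->
  List.Forall S l -> prodw l = w ->
  exists l1 a l2, l = l1 ++ a :: l2 /\ s * w = prodw (l1 ++ l2).
Proof.
move=> Ss H Hl Ew.
have H' : (len (w^-1 * s) < len w^-1)%N by rewrite -{1}(S_V Ss) -invgM !len_inv.
have [l1 [a [l2 [El E]]]] := exch Ss H' (Forall_rev Hl) (etrans (prodw_rev Hl) (congr1 _ Ew)).
exists (rev l2), a, (rev l1); split.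
  by rewrite -(revK l) El rev_cat rev_cons -cats1 -catA.
have Hr : List.Forall S (l1 ++ l2).
  by move: (Forall_rev Hl); rewrite El => /Forall_cat [H1 /Forall_cons_iff [_ H2]]; apply/Forall_cat.
rewrite -rev_cat prodw_rev // -E invgM invgK S_V //.
Qed.


Lemma len_Sl w s : S s -> len (s * w) = (len w).+1 \/ (len (s * w)).+1 = len w.
Proof.
move=> Ss; have H := len_S w^-1 Ss.
by rewrite -(S_V Ss) -invgM !len_inv in H.
Qed.

Lemma cat_split (l1 : seq W) a l2 p q : l1 ++ a :: l2 = p ++ q ->
  (exists m, p = l1 ++ a :: m /\ l2 = m ++ q) \/
  (exists m, q = m ++ a :: l2 /\ l1 = p ++ m).
Proof.
elim: p l1 => [|x p IH] l1 /=; first by move=> <-; right; exists l1.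
case: l1 => [|y l1] /=.
  by case=> -> ->; left; exists p.
case=> -> /IH [[m [-> ->]]|[m [-> ->]]]; [left|right]; by exists m.
Qed.

Definition PW (J : W -> Prop) w := exists l, List.Forall J l /\ prodw l = w.

Lemma PW1 J : PW J 1.
Proof. by exists [::]; rewrite prodw_nil. Qed.
Lemma PWJ (J : W -> Prop) x : J x -> PW J x.
Proof. by move=> Jx; exists [:: x]; rewrite prodw_cons prodw_nil mulg1; split => //; constructor. Qed.
Lemma PWM J x y : PW J x -> PW J y -> PW J (x * y).
Proof.
move=> [lx [Hx <-]] [ly [Hy <-]]; exists (lx ++ ly); rewrite prodw_cat; split => //.
exact/Forall_cat.
Qed.
Lemma PWV (J : W -> Prop) x : (forall y, J y -> S y) -> PW J x -> PW J x^-1.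
Proof.
move=> hJ [lx [Hx <-]]; exists (rev lx); split; first exact: Forall_rev.
apply: prodw_rev; exact: Forall_impl' Hx.
Qed.
Lemma PW_word (J : W -> Prop) (l : seq W) : List.Forall J l -> PW J (prodw l).
Proof. by move=> H; exists l. Qed.

Lemma Forall_sub (J : W -> Prop) (l : seq W) : (forall y, J y -> S y) ->
  List.Forall J l -> List.Forall S l.
Proof. move=> hJ; exact: Forall_impl'. Qed.

Lemma RW (J : W -> Prop) w : (forall y, J y -> S y) -> PW J w ->
  exists l, List.Forall J l /\ size l = len w /\ prodw l = w.
Proof.
move=> hJ [l [Hl <-]]; elim/last_ind: l Hl => [|l a IH].
  by exists [::]; rewrite prodw_nil len1.
rewrite -cats1 => /Forall_cat [Hl /Forall_cons_iff [Ja _]].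
have [r [Hr [Hs Er]]] := IH Hl.
rewrite cats1 prodw_rcons.
case: (len_S (prodw l) (hJ _ Ja)) => HL.
  exists (rcons r a); rewrite prodw_rcons Er size_rcons Hs HL; split => //.
  by rewrite -cats1; apply/Forall_cat; split => //; constructor.
have lt : (len (prodw l * a) < len (prodw l))%N by rewrite -HL.
have [l1 [x [l2 [E1 E2]]]] := exch (hJ _ Ja) lt (Forall_sub hJ Hr) Er.
exists (l1 ++ l2); split.
  by move: Hr; rewrite E1 => /Forall_cat [H1 /Forall_cons_iff [_ H2]]; apply/Forall_cat.
split => //; apply/eqP; rewrite -eqSS HL -Hs E1 !size_cat /= addnS //.
Qed.

Lemma len_one_J (J : W -> Prop) w : (forall y, J y -> S y) -> PW J w -> len w = 1%N -> J w.
Proof.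
move=> hJ Hw H1; have [[|a [|b l]] [Hl [Hs <-]]] := RW hJ Hw; rewrite H1 // in Hs.
by rewrite prodw_cons prodw_nil mulg1; move/Forall_cons_iff: Hl => [].
Qed.


Section Disj.
Variables B C : W -> Prop.
Hypothesis hB : forall x, B x -> S x.
Hypothesis hC : forall x, C x -> S x.
Hypothesis hBC : forall x, ~ (B x /\ C x).

Lemma T4 x : PW B x -> PW C x -> x = 1.
Proof.
move: {2}(len x) (erefl (len x)) => n; elim/ltn_ind: n x => n IH x En HB HC.
have [lb [Hb [Hs Eb]]] := RW hB HB.
case/lastP: lb Hb Hs Eb => [|l b] Hb Hs Eb; first by rewrite -Eb prodw_nil.
move: Hb; rewrite -cats1 => /Forall_cat [Hl /Forall_cons_iff [Bb _]].
rewrite prodw_rcons in Eb.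
have Exb : x * b = prodw l by rewrite -Eb -mulgA S_sq ?mulg1 //; apply: hB.
have lt : (len (x * b) < len x)%N.
  by rewrite Exb; apply: (leq_ltn_trans (len_le (Forall_sub hB Hl))); rewrite -Hs size_rcons.
have [lc [Hc Ec]] := HC.
have [l1 [a [l2 [E1 E2]]]] := exch (hB Bb) lt (Forall_sub hC Hc) Ec.
have HC' : PW C (x * b).
  by rewrite E2; apply: PW_word; move: Hc; rewrite E1 => /Forall_cat [H1 /Forall_cons_iff [_ H2]]; apply/Forall_cat.
have HB' : PW B (x * b) by rewrite Exb; exact: PW_word.
have x1 := IH _ (eq_ind _ (fun m => (len (x * b) < m)%N) lt _ En) (x * b) erefl HB' HC'.
have xb : x = b by apply: (mulIg b); rewrite x1 S_sq //; apply: hB.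
exfalso; apply: (hBC (x := b)); split => //.
apply: (len_one_J hC); first by rewrite -xb.
exact: len_s (hB Bb).
Qed.


Lemma conj1 (g c : W) : g * c * g^-1 = 1 -> c = 1.
Proof.
move=> E; have : c = g^-1 * (g * c * g^-1) * g by rewrite !mulgA mulVg mul1g mulgVK.
by rewrite E mulg1 mulVg.
Qed.

Lemma Forall_split (J : W -> Prop) (l1 : seq W) a l2 :
  List.Forall J (l1 ++ a :: l2) -> List.Forall J (l1 ++ l2) /\ J a.
Proof.
move=> /Forall_cat [H1 /Forall_cons_iff [Ja H2]]; split => //; exact/Forall_cat.
Qed.

Lemma T5 f g : PW B f -> PW C g -> len (f * g) = (len f + len g)%N.
Proof.
move: {2}(len g) (erefl (len g)) => n; elim/ltn_ind: n g => n IH g En Hf Hg.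
have [lg [Hlg [Hs Eg]]] := RW hC Hg.
case/lastP: lg Hlg Hs Eg => [|l c] Hlg Hs Eg.
  by rewrite -Eg prodw_nil mulg1 len1 addn0.
move: Hlg; rewrite -cats1 => /Forall_cat [Hl /Forall_cons_iff [Cc _]].
rewrite prodw_rcons in Eg; rewrite size_rcons in Hs.
have Sc := hC Cc.
have Hl' := Forall_sub hC Hl.
have Hg1 : len (prodw l) = size l.
  apply/eqP; rewrite eqn_leq len_le //=.
  have := len_mul (prodw l) c; rewrite Eg (len_s Sc); lia.
have IHg1 := IH (size l) ltac:(lia) (prodw l) Hg1 Hf (PW_word Hl).
have [lf [Hlf Ef]] := Hf.
have Hlf' := Forall_sub hB Hlf.
case: (len_S (f * prodw l) Sc) => HL.
  by rewrite -[in LHS]Eg mulgA HL IHg1 Hg1 -Hs addnS.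
have lt : (len (f * prodw l * c) < len (f * prodw l))%N by rewrite -HL.
have Hw : List.Forall S (lf ++ l) by apply/Forall_cat.
have [l1 [a [l2 [E1 E2]]]] := exch Sc lt Hw (etrans (prodw_cat _ _) (congr1 (fun x => x * _) Ef)).
case: (cat_split (esym E1)) => [[m [E3 E4]]|[m [E3 E4]]].
  have Hf' : PW B (prodw (l1 ++ m)).
    by apply: PW_word; move: Hlf; rewrite E3 => /Forall_split [].
  move: E2; rewrite E4 catA prodw_cat => E2.
  have E5 : f^-1 * prodw (l1 ++ m) = prodw l * c * (prodw l)^-1.
    by rewrite -(mulgK (prodw l) (prodw (l1 ++ m))) -E2 !mulgA mulVg mul1g.
  have := T4 (x := prodw l * c * (prodw l)^-1).
  rewrite -E5 => /(_ (PWM (PWV hB Hf) Hf')); rewrite E5.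
  move=> /(_ (PWM (PWM (PW_word Hl) (PWJ Cc)) (PWV hC (PW_word Hl)))) /conj1 c1.
  by case: (S_ne1 Sc).
move: E2; rewrite E4 -catA prodw_cat Ef -mulgA => /mulgI E2.
have Hl2 : List.Forall C (m ++ a :: l2) by rewrite -E3.
have := len_le (Forall_sub hC (proj1 (Forall_split Hl2))).
rewrite -E2 Eg size_cat => H.
have Hsz : size l = (size m + size l2).+1 by rewrite E3 size_cat /= addnS.
exfalso; lia.
Qed.

End Disj.

Lemma RW_last (J : W -> Prop) w : (forall y, J y -> S y) -> PW J w ->
  w = 1 \/ exists w1 c, J c /\ PW J w1 /\ w = w1 * c /\ len w = (len w1).+1.
Proof.
move=> hJ Hw; have [lg [Hlg [Hs Eg]]] := RW hJ Hw.
case/lastP: lg Hlg Hs Eg => [|l c] Hlg Hs Eg; first by left; rewrite -Eg prodw_nil.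
move: Hlg; rewrite -cats1 => /Forall_cat [Hl /Forall_cons_iff [Cc _]].
rewrite prodw_rcons in Eg; rewrite size_rcons in Hs.
right; exists (prodw l), c; split => //; split; first exact: PW_word.
split; first by rewrite Eg.
have Sc := hJ _ Cc.
have H1 := len_le (Forall_sub hJ Hl).
have := len_mul (prodw l) c; rewrite Eg (len_s Sc); lia.
Qed.

Lemma single_cat (t a : W) m l2 : [:: t] = m ++ a :: l2 -> m = [::] /\ a = t /\ l2 = [::].
Proof. by case: m => [|x [|y m]] //= [] -> ->. Qed.

Section Disj2.
Variables B C : W -> Prop.
Hypothesis hB : forall x, B x -> S x.
Hypothesis hC : forall x, C x -> S x.
Hypothesis hBC : forall x, ~ (B x /\ C x).
Let hCB : forall x, ~ (C x /\ B x) := fun x H => hBC (conj (proj2 H) (proj1 H)).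
Let addBC := T5 hB hC hBC.
Let addCB := T5 hC hB hCB.
Let capBC := T4 hB hC hBC.

Lemma Lp g h b t : PW C g -> PW C h -> B b -> B t -> b * g = h * t -> b = t.
Proof.
move: {2}(len g) (erefl (len g)) => n; elim/ltn_ind: n g h => n IH g h En Hg Hh Bb Bt E.
have Sb := hB Bb; have St := hB Bt.
case: (RW_last hC Hg) => [g1|[g1 [c [Cc [Hg1 [Eg Lg]]]]]].
  subst g; rewrite mulg1 in E.
  have Eh : h = b * t by rewrite E -mulgA S_sq ?mulg1.
  have h1 : h = 1 by apply: capBC => //; rewrite Eh; apply: PWM; apply: PWJ.
  by move: E; rewrite h1 mul1g.
have Sc := hC Cc.
have Ebgc : b * g * c = b * g1 by rewrite Eg -!mulgA S_sq ?mulg1.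
have lt : (len (b * g * c) < len (b * g))%N.
  rewrite Ebgc.
  by rewrite !addBC ?(len_s Sb) //; [lia|apply: PWJ|apply: PWJ].
have [lh [Hlh Eh]] := Hh.
have Hw : List.Forall S (lh ++ [:: t]).
  by apply/Forall_cat; split; [exact: Forall_sub hC Hlh|constructor].
have Ew : prodw (lh ++ [:: t]) = b * g by rewrite prodw_cat prodw_cons prodw_nil mulg1 Eh E.
have [l1 [a [l2 [E1 E2]]]] := exch Sc lt Hw Ew.
case: (cat_split (esym E1)) => [[m [E3 E4]]|[m [E3 E4]]].
  have Hh' : PW C (prodw (l1 ++ m)).
    by apply: PW_word; move: Hlh; rewrite E3 => /Forall_split [].
  apply: (IH (len g1) _ g1 (prodw (l1 ++ m))) => //; first by rewrite En in Lg; lia.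
  by rewrite -Ebgc E2 E4 catA prodw_cat prodw_cons prodw_nil mulg1.
have [m0 [a0 l20]] := single_cat E3; subst m l2 a.
move: E2; rewrite E4 cats0 cats0 Eh => E2.
have tc : t * c = 1.
  apply: (mulgI h); rewrite mulg1 -{2}E2 mulgA -E; done.
exfalso; apply: (hBC (x := c)); split => //.
have -> : c = t by rewrite -(mulKg t c) tc mulg1 S_V.
done.
Qed.

Lemma Lq y g t : PW B y -> PW C g -> B t -> y * g = g * t -> y = t.
Proof.
move=> Hy Hg Bt E.
have Ly : len y = 1%N.
  have := addBC Hy Hg; rewrite E addCB ?(len_s (hB Bt)) //; [lia|exact: PWJ].
have By := len_one_J hB Hy Ly.
exact: (Lp Hg Hg By Bt E).
Qed.

Lemma Ln g r x : PW C g -> PW B r -> PW B x -> x * g = g * r -> x = r.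
Proof.
move: {2}(len r) (erefl (len r)) => n; elim/ltn_ind: n r x => n IH r x En Hg Hr Hx E.
have Lx : len x = len r by have := addBC Hx Hg; rewrite E addCB //; lia.
case: (RW_last hB Hr) => [r1|[r1 [b [Bb [Hr1 [Er Lr]]]]]].
  by subst r; apply: len0; rewrite Lx len1.
have Sb := hB Bb.
have Exgb : x * g * b = g * r1 by rewrite E Er -!mulgA S_sq ?mulg1.
have lt : (len (x * g * b) < len (x * g))%N.
  by rewrite Exgb E !addCB // Lr; lia.
have [lx [Hlx Ex]] := Hx; have [lg [Hlg Eg]] := Hg.
have Hw : List.Forall S (lx ++ lg) by apply/Forall_cat; split; [exact: Forall_sub hB Hlx|exact: Forall_sub hC Hlg].
have [l1 [a [l2 [E1 E2]]]] := exch Sb lt Hw (etrans (prodw_cat _ _) (congr2 _ Ex Eg)).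
case: (cat_split (esym E1)) => [[m [E3 E4]]|[m [E3 E4]]].
  have Hx' : PW B (prodw (l1 ++ m)).
    by apply: PW_word; move: Hlx; rewrite E3 => /Forall_split [].
  move: E2; rewrite E4 catA prodw_cat Eg => E2.
  have x1 : prodw (l1 ++ m) = r1.
    apply: (IH (len r1) _ r1) => //; first by rewrite En in Lr; lia.
    by rewrite -E2 -Exgb.
  rewrite x1 in E2.
  have E2' : x * g = r1 * g * b by rewrite -E2 -mulgA S_sq ?mulg1.
  have E5 : r1^-1 * x * g = g * b by rewrite -mulgA E2' -!mulgA mulKg.
  have E6 := Lq (PWM (PWV hB Hr1) Hx) Hg Bb E5.
  by rewrite Er -E6 mulVKg.
exfalso.
move: E2; rewrite E4 -catA prodw_cat Ex -mulgA => /mulgI E2.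
have Hb : b = g^-1 * prodw (m ++ l2) by rewrite -E2 mulKg.
have b1 : b = 1.
  apply: capBC; first exact: PWJ.
  rewrite Hb; apply: PWM; first exact: PWV hC (Hg).
  by apply: PW_word; move: Hlg; rewrite E3 => /Forall_split [].
exact: (S_ne1 Sb b1).
Qed.

End Disj2.


Lemma PL1 (J : W -> Prop) f0 w : (forall y, J y -> S y) ->
  (forall z, PW J z -> (len f0 <= len (f0 * z))%N) -> PW J w ->
  len (f0 * w) = (len f0 + len w)%N.
Proof.
move=> hJ Hmin; move: {2}(len w) (erefl (len w)) => n.
elim/ltn_ind: n w => n IH w En Hw.
case: (RW_last hJ Hw) => [->|[w1 [s [Js [Hw1 [Ew Lw]]]]]].
  by rewrite mulg1 len1 addn0.
have Ss := hJ _ Js.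
have IHw1 := IH (len w1) ltac:(lia) w1 erefl Hw1.
case: (len_S (f0 * w1) Ss) => HL.
  have : len (f0 * w) = (len (f0 * w1)).+1 by rewrite Ew mulgA HL.
  lia.
have lt : (len (f0 * w1 * s) < len (f0 * w1))%N by rewrite -HL.
have [lf [Hlf [Sf Ef]]] := len_word f0.
have [lw [Hlw [Sw Ew1]]] := RW hJ Hw1.
have Hc : List.Forall S (lf ++ lw) by apply/Forall_cat; split => //; exact: Forall_sub hJ Hlw.
have [l1 [a [l2 [E1 E2]]]] := exch Ss lt Hc (etrans (prodw_cat _ _) (congr2 _ Ef Ew1)).
case: (cat_split (esym E1)) => [[m [E3 E4]]|[m [E3 E4]]].
  move: E2; rewrite E4 catA prodw_cat Ew1 => E2.
  have Ef' : prodw (l1 ++ m) = f0 * (w1 * s * w1^-1) by rewrite !mulgA E2 mulgK.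
  have := Hmin (w1 * s * w1^-1); rewrite -Ef'.
  move=> /(_ (PWM (PWM Hw1 (PWJ Js)) (PWV hJ Hw1))).
  have Hl1m : List.Forall S (l1 ++ m) by move: Hlf; rewrite E3 => /Forall_split [].
  have := len_le Hl1m; rewrite size_cat.
  have : size lf = (size l1 + size m).+1 by rewrite E3 size_cat /= addnS.
  lia.
move: E2; rewrite E4 -catA prodw_cat Ef -mulgA => /mulgI E2.
have Hm : List.Forall S (m ++ l2) by move: Hlw; rewrite E3 => /Forall_split [] /(Forall_sub hJ).
have := len_le Hm; rewrite -E2 -Ew size_cat.
have : size lw = (size m + size l2).+1 by rewrite E3 size_cat /= addnS.
lia.
Qed.

Lemma PL (J : W -> Prop) f w : (forall y, J y -> S y) ->
  (forall s, J s -> ~ (len (f * s) < len f)%N) -> PW J w ->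
  len (f * w) = (len f + len w)%N.
Proof.
move=> hJ Hd Hw.
have [m [[z0 [Hz0 Ez0]] Hmin]] := @ex_min (fun n => exists z, PW J z /\ len (f * z) = n)
   (ex_intro _ (len f) (ex_intro _ 1 (conj (PW1 J) (congr1 _ (mulg1 f))))).
set f0 := f * z0.
have Hf0 : forall z, PW J z -> (len f0 <= len (f0 * z))%N.
  move=> z Hz; rewrite /f0 Ez0 -mulgA; apply: Hmin; exists (z0 * z); split => //; exact: PWM.
have Ef : f = f0 * z0^-1 by rewrite /f0 mulgK.
have Hz0' := PWV hJ Hz0.
case: (RW_last hJ Hz0') => [u1|[u1 [s [Js [Hu1 [Eu Lu]]]]]].
  by rewrite Ef u1 mulg1; exact: (PL1 hJ Hf0 Hw).
exfalso; apply: (Hd s Js).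
have Efs : f * s = f0 * u1 by rewrite Ef Eu -!mulgA S_sq ?mulg1 //; apply: hJ.
rewrite Efs Ef !(PL1 hJ Hf0) // Lu; lia.
Qed.

Lemma Deo c t y : S c -> S t -> ~ (len (y * t) < len y)%N ->
  (len (c * y * t) < len (c * y))%N -> c * y = y * t.
Proof.
move=> Sc St Hyt lt.
have Lyt : len (y * t) = (len y).+1 by case: (len_S y St) => // H; exfalso; apply: Hyt; rewrite -H.
case: (len_Sl y Sc) => Lcy; last first.
  exfalso.
  have : y * t = c * (c * y * t) by rewrite !mulgA S_sq ?mul1g.
  move=> E; have := len_mul c (c * y * t); rewrite -E (len_s Sc); lia.
have [ly [Hly [Sy Ey]]] := len_word y.
have Hc : List.Forall S (c :: ly) by constructor.
have Ecy : prodw (c :: ly) = c * y by rewrite prodw_cons Ey.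
have [l1 [a [l2 [E1 E2]]]] := exch St lt Hc Ecy.
case: l1 E1 E2 => [|x l1] /=.
  case=> _ El; rewrite -El Ey => E2.
  by rewrite -{2}E2 -mulgA S_sq ?mulg1.
case=> <- E1; rewrite prodw_cons -mulgA => /mulgI E2.
exfalso.
have Hm : List.Forall S (l1 ++ l2) by move: Hly; rewrite E1 => /Forall_split [].
have := len_le Hm; rewrite -E2 Lyt -Sy E1 !size_cat /=; lia.
Qed.


Section Main.
Variables B C : W -> Prop.
Hypothesis hB : forall x, B x -> S x.
Hypothesis hC : forall x, C x -> S x.
Hypothesis hBC : forall x, ~ (B x /\ C x).
Let hCB : forall x, ~ (C x /\ B x) := fun x H => hBC (conj (proj2 H) (proj1 H)).
Let addBC := T5 hB hC hBC.
Let addCB := T5 hC hB hCB.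
Let capBC := T4 hB hC hBC.

Definition Jt (t : W) := fun x => C x \/ x = t.

Lemma hJt t : B t -> forall x, Jt t x -> S x.
Proof. by move=> Bt x [/hC|->] //; apply: hB. Qed.

Lemma PW_C_J t w : PW C w -> PW (Jt t) w.
Proof. by move=> [l [Hl E]]; exists l; split => //; apply: Forall_impl' Hl => x Cx; left. Qed.

Lemma NoDescJ f t w : PW B f -> B t -> ~ (len (f * t) < len f)%N -> PW (Jt t) w ->
  len (f * w) = (len f + len w)%N.
Proof.
move=> Hf Bt Hft Hw; apply: (PL (hJt Bt)) => // x [Cx|->] //.
rewrite addBC ?(len_s (hC Cx)) //; [lia|exact: PWJ].
Qed.

Lemma P3 f g t : PW B f -> PW C g -> B t ->
  (len (f * t) < len f)%N <-> (len (g * f * t) < len (g * f))%N.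
Proof.
move=> Hf Hg Bt.
have Hft : PW B (f * t) by apply: PWM => //; exact: PWJ.
rewrite -mulgA (addCB Hg Hft) (addCB Hg Hf); lia.
Qed.

Lemma P2 f g t : PW B f -> PW C g -> B t -> ~ (len (f * t) < len f)%N ->
  ~ (len (f * g * t) < len (f * g))%N.
Proof.
move=> Hf Hg Bt Hft.
rewrite -mulgA (@NoDescJ f t (g * t) Hf Bt Hft); last by apply: PWM; [exact: PW_C_J|apply: PWJ; right].
rewrite addCB ?addBC ?(len_s (hB Bt)) //; [lia|exact: PWJ].
Qed.

Lemma M f t : PW B f -> B t -> ~ (len (f * t) < len f)%N ->
  forall u w, PW C u -> PW (Jt t) w -> f * w = u * f -> PW C w.
Proof.
move=> Hf Bt Hft u w Hu; move: {2}(len u) (erefl (len u)) => n.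
elim/ltn_ind: n u w Hu => n IH u w Hu En Hw E.
case: (RW_last hC (PWV hC Hu)) => [u1|[v1 [c [Cc [Hv1 [Eu Lu]]]]]].
  have u1' : u = 1 by rewrite -(invgK u) u1 invg1.
  rewrite u1' mul1g in E.
  have -> : w = 1 by apply: (mulgI f); rewrite E mulg1.
  exact: PW1.
have Sc := hC Cc.
have Eu' : u = c * v1^-1 by rewrite -(invgK u) Eu invgM (S_V Sc).
have Hu1 := PWV hC Hv1.
have Lu1 : len u = (len v1^-1).+1 by rewrite -len_inv Lu len_inv.
have lt : (len (c * (f * w)) < len (f * w))%N.
  have e1 : c * (f * w) = v1^-1 * f by rewrite E Eu' !mulgA S_sq // mul1g.
  rewrite e1 (addCB Hu1 Hf) E (addCB Hu Hf) Lu1; lia.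
have [lf [Hlf Ef]] := Hf; have [lw [Hlw Ew]] := Hw.
have Hc : List.Forall S (lf ++ lw).
  by apply/Forall_cat; split; [exact: Forall_sub hB Hlf|exact: Forall_sub (hJt Bt) Hlw].
have [l1 [a [l2 [E1 E2]]]] := exchL Sc lt Hc (etrans (prodw_cat _ _) (congr2 _ Ef Ew)).
case: (cat_split (esym E1)) => [[m [E3 E4]]|[m [E3 E4]]].
  exfalso; move: E2; rewrite E4 catA prodw_cat -Ew mulgA => /mulIg E2.
  have Hc' : PW B c.
    have -> : c = prodw (l1 ++ m) * f^-1 by rewrite -E2 mulgK.
    apply: PWM; last exact: PWV hB Hf.
    by apply: PW_word; move: Hlf; rewrite E3 => /Forall_split [].
  by apply: (S_ne1 Sc); apply: capBC => //; exact: PWJ.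
move: E2; rewrite E4 -catA prodw_cat Ef => E2.
set w' := prodw (m ++ l2) in E2.
have Hw' : PW (Jt t) w' by apply: PW_word; move: Hlw; rewrite E3 => /Forall_split [].
set z := f^-1 * c * f.
have Hz : z = w' * w^-1 by rewrite /z -(mulKg f w') -E2 !mulgA mulgK.
have Hzj : PW (Jt t) z by rewrite Hz; apply: PWM => //; exact: PWV (hJt Bt) Hw.
have Efz : f * z = c * f by rewrite /z !mulgA mulgV mul1g.
have Lz : len z = 1%N.
  have := NoDescJ Hf Bt Hft Hzj; rewrite Efz addCB ?(len_s Sc) //; [lia|exact: PWJ].
case: (len_one_J (hJt Bt) Hzj Lz) => [Cz|zt].
  have Hzw : PW C (z * w).
    apply: (IH (len v1^-1) _ (v1^-1)) => //; first by rewrite -En Lu1.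
      exact: PWM.
    by rewrite mulgA Efz -mulgA E Eu' !mulgA S_sq // mul1g.
  have -> : w = z^-1 * (z * w) by rewrite mulKg.
  by apply: PWM => //; apply: PWV => //; exact: PWJ.
exfalso; apply: (S_ne1 Sc); apply: capBC; last exact: PWJ.
have -> : c = f * t * f^-1 by rewrite -zt Efz mulgK.
by apply: PWM; [apply: PWM => //; exact: PWJ|exact: PWV].
Qed.


Lemma P4 f g g' t : PW B f -> PW C g -> PW C g' -> B t -> ~ (len (f * t) < len f)%N ->
  ~ (len (g * f * g' * t) < len (g * f * g'))%N.
Proof.
move=> Hf [lg [Hlg <-]] Hg' Bt Hft; have St := hB Bt.
elim: lg Hlg => [|c l IH]; first by rewrite prodw_nil !mul1g => _; exact: P2.
move=> /Forall_cons_iff [Cc Hl]; have Sc := hC Cc.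
rewrite prodw_cons.
have HP : PW C (prodw l) by exact: PW_word.
move: (prodw l) HP (IH Hl) => P HP IHl.
have e : c * P * f * g' = c * (P * f * g') by rewrite !mulgA.
rewrite e => lt.
have Ecy := Deo Sc St IHl lt.
have Ew : f * (g' * t * g'^-1) = P^-1 * c * P * f.
  have : P^-1 * c * P * f = P^-1 * (c * (P * f * g')) * g'^-1 by rewrite !mulgA mulgK.
  by rewrite Ecy !mulgA mulVg mul1g => ->.
have Hu : PW C (P^-1 * c * P) by apply: PWM => //; apply: PWM; [exact: PWV|exact: PWJ].
have Hw : PW (Jt t) (g' * t * g'^-1).
  apply: PWM; first by apply: PWM; [exact: PW_C_J|apply: PWJ; right].
  by apply: PWV; [exact: hJt|exact: PW_C_J].
have HwC := M Hf Bt Hft Hu Hw Ew.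
apply: (S_ne1 St); apply: capBC; first exact: PWJ.
have -> : t = g'^-1 * (g' * t * g'^-1) * g' by rewrite !mulgA mulVg mul1g mulgVK.
by apply: PWM => //; apply: PWM => //; exact: PWV.
Qed.

Lemma comm_PW s g : (forall c, C c -> c * s = s * c) -> PW C g -> g * s = s * g.
Proof.
move=> Hc [l [Hl <-]]; elim: l Hl => [|a l IH]; first by rewrite prodw_nil mul1g mulg1.
move=> /Forall_cons_iff [Ca Hl].
by rewrite prodw_cons -mulgA IH // !mulgA Hc.
Qed.

Lemma P1 f g g' s : PW B f -> PW C g -> PW C g' -> B s ->
  (forall c, C c -> c * s = s * c) ->
  (len (f * s) < len f)%N <-> (len (g * f * g' * s) < len (g * f * g'))%N.
Proof.
move=> Hf Hg Hg' Bs Hc; have Ss := hB Bs.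
split => H; last first.
  case Hb: (len (f * s) < len f)%N => //; exfalso.
  by apply: (P4 Hf Hg Hg' Bs _ H); rewrite Hb.
have Hf1 : PW B (f * s) by apply: PWM => //; exact: PWJ.
have Hf1s : ~ (len (f * s * s) < len (f * s))%N.
  by rewrite -mulgA S_sq // mulg1; lia.
have := P4 Hf1 Hg Hg' Bs Hf1s.
have e1 : g * (f * s) * g' * s = g * f * g'.
  by rewrite -(mulgA _ g') (comm_PW Hc Hg') !mulgA -(mulgA _ s s) S_sq // mulg1.
have e2 : g * (f * s) * g' = g * f * g' * s.
  by rewrite !mulgA -!(mulgA (g * f)) (comm_PW Hc Hg').
rewrite e1 e2 => H2.
by case: (len_S (g * f * g') Ss) => H3; lia.
Qed.

Lemma P5 f f' g t : PW B f -> PW B f' -> PW C g -> B t ->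
  len (f * f') = (len f + len f')%N -> (len (f' * t) < len f')%N ->
  (len (f * g * f' * t) < len (f * g * f'))%N.
Proof.
move=> Hf Hf' Hg Bt Lff' Lf't; have St := hB Bt.
have [h Eh] : exists h, h = f' * t by eexists.
have Hh : PW B h by rewrite Eh; apply: PWM => //; exact: PWJ.
have Ef' : f' = h * t by rewrite Eh -mulgA S_sq ?mulg1.
have Lf' : len f' = (len h).+1 by case: (len_S f' St) => H; rewrite Eh; lia.
have Hht : ~ (len (h * t) < len h)%N by rewrite -Ef'; lia.
have [lf [Hlf [Sf Ef]]] := RW hB Hf.
have Claim : forall l2 l1, lf = l1 ++ l2 ->
    ~ (len (prodw l2 * g * h * t) < len (prodw l2 * g * h))%N.
  elim => [|b l3 IH] l1 El.
    by rewrite prodw_nil !mul1g => /(proj2 (P3 Hh Hg Bt)).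
  have /Forall_split [Hl13 Bb] : List.Forall B (l1 ++ b :: l3) by rewrite -El.
  have Sb := hB Bb.
  have Hl3 : List.Forall B l3 by move/Forall_cat: Hl13 => [].
  have Hl1 : List.Forall B l1 by move/Forall_cat: Hl13 => [].
  have El' : lf = rcons l1 b ++ l3 by rewrite El cat_rcons.
  have IH' := IH _ El'.
  rewrite prodw_cons.
  have [P3 EP3] : exists P3, P3 = prodw l3 by eexists.
  rewrite -EP3 in IH' *.
  have e : b * P3 * g * h = b * (P3 * g * h) by rewrite !mulgA.
  rewrite e => lt.
  have Eby := Deo Sb St IH' lt.
  have Ebg : b * P3 * g = P3 * g * (h * t * h^-1).
    by rewrite -(mulgK h (b * P3 * g)) e Eby !mulgA.
  have HP3 : PW B P3 by rewrite EP3; exact: PW_word.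
  have Hx : PW B (P3^-1 * b * P3) by apply: PWM => //; apply: PWM; [exact: PWV|exact: PWJ].
  have Hr : PW B (h * t * h^-1) by apply: PWM; [apply: PWM => //; exact: PWJ|exact: PWV].
  have Exg : P3^-1 * b * P3 * g = g * (h * t * h^-1).
    by apply: (mulgI P3); rewrite !mulgA mulgV mul1g Ebg !mulgA.
  have xr := Ln hB hC hBC Hg Hr Hx Exg.
  have Ebh : b * (P3 * h) = P3 * h * t.
    have E0 : b * P3 = P3 * (h * t * h^-1) by rewrite -xr !mulgA mulgV mul1g.
    by rewrite mulgA E0 !mulgA mulgVK.
  have Eff : f * f' = prodw l1 * (P3 * h).
    have E1 : f * f' = prodw l1 * (b * (P3 * h * t)) by rewrite -Ef El prodw_cat prodw_cons -EP3 Ef' !mulgA.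
    by rewrite E1 -Ebh (mulgA b b) S_sq // mul1g.
  have L1 := len_le (Forall_sub hB Hl1).
  have L3 := len_le (Forall_sub hB Hl3).
  have := len_mul (prodw l1) (P3 * h); have := len_mul P3 h.
  rewrite -Eff Lff' -Sf El size_cat /=; rewrite -EP3 in L3; lia.
have := Claim lf [::] erefl; rewrite Ef => H.
rewrite -mulgA -Eh Ef' mulgA.
move/negP: H; rewrite -leqNgt => H.
case: (len_S (f * g * h) St) => H3; first by rewrite H3.
by move: H; rewrite -H3 ltnn.
Qed.

End Main.

End Cox.

Theorem lemma10p23 (W : groupType) (S B C : W -> Prop) (f f' g g' s t : W) :
  coxeter_system S ->
  (forall x, S x <-> B x \/ C x) -> (forall x, ~ (B x /\ C x)) ->
  parabolic B f -> parabolic B f' -> parabolic C g -> parabolic C g' ->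
  B s -> (forall c, C c -> c * s = s * c) -> B t ->
  (coxlen S (f * g) = (coxlen S f + coxlen S g)%N /\
   coxlen S (g * f) = (coxlen S f + coxlen S g)%N) /\
  (rdescent S f s <-> rdescent S (g * f * g') s) /\
  (~ rdescent S f t -> ~ rdescent S (f * g) t) /\
  (rdescent S f t <-> rdescent S (g * f) t) /\
  (~ rdescent S f t -> ~ rdescent S (g * f * g') t) /\
  (coxlen S (f * f') = (coxlen S f + coxlen S f')%N ->
     rdescent S f' t -> rdescent S (f * g * f') t).
Proof.
move=> hS hSBC hBC pf pf' pg pg' Bs Hc Bt.
have hB : forall x, B x -> S x by move=> x Bx; apply/hSBC; left.
have hC : forall x, C x -> S x by move=> x Cx; apply/hSBC; right.
have hCB : forall x, ~ (C x /\ B x) by move=> x [H1 H2]; apply: (hBC x).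
have toPW : forall (J : W -> Prop) w, (forall x, J x -> S x) -> parabolic J w -> PW J w.
  move=> J w hJ [l [Hl E]]; exists l; split => //.
  apply: (Forall_impl' _ Hl) => x [Jx|Jx] //.
  have e : x = x^-1 by rewrite -{1}(S_V hS (hJ _ Jx)) invgK.
  by rewrite e.
have Hf := toPW _ _ hB pf; have Hf' := toPW _ _ hB pf'.
have Hg := toPW _ _ hC pg; have Hg' := toPW _ _ hC pg'.
have St := hB _ Bt; have Ss := hB _ Bs.
rewrite /rdescent.
split.
  split; first exact: (T5 hS hB hC hBC Hf Hg).
  by rewrite (T5 hS hC hB hCB Hg Hf) addnC.
split.
  have := P1 hS hB hC hBC Hf Hg Hg' Bs Hc.
  by move=> H; split => [[_ /H]|[_ /H]].
split.
  move=> H [_ H2]; apply: (P2 hS hB hC hBC Hf Hg Bt _ H2).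
  by move=> H3; apply: H.
split.
  have := P3 hS hB hC hBC Hf Hg Bt.
  by move=> H; split => [[_ /H]|[_ /H]].
split.
  move=> H [_ H2]; apply: (P4 hS hB hC hBC Hf Hg Hg' Bt _ H2).
  by move=> H3; apply: H.
move=> Lff' [_ Lf't]; split => //.
exact: (P5 hS hB hC hBC Hf Hf' Hg Bt Lff' Lf't).
Qed.
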